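(* Under the utility optimization algorithm described in the context, with initial conditions $Q_a^b(0)=0$ and $E_{[a,c]}(0)=0$, for all nodes $a,b$, all links $l_{[a,c]}\in\mathcal{L}$ and all time slots $t\ge 0$: $$0\le Q_a^b(t)\le \beta V+R_{max},\qquad 0\le E_{[a,c]}(t)\le \theta_{[a,c]}+K_{max}.$$
   Context: Network: a graph $G=(\mathcal{N},\mathcal{L})$ with directed links $l_{[a,c]}$; $\mathcal{N}_a^{in}$ ($\mathcal{N}_a^{out}$) is the set of nodes with a link into (out of) $a$; $d_{max}=\max_a\max(|\mathcal{N}_a^{in}|,|\mathcal{N}_a^{out}|)$. Time is slotted, $t=0,1,2,\dots$. For each link: $K_{[a,c]}\le K_{max}$ is the key generated per slot when QKD is on; $S_{[a,c]}(t)\in\{0,1\}$ the on/off decision; $P_{[a,c]}(t)\in[0,P_{max}]$ the key consumed; $E_{[a,c]}(t)$ the key stored, with $E_{[a,c]}(t+1)=E_{[a,c]}(t)-P_{[a,c]}(t)+S_{[a,c]}(t)K_{[a,c]}$ and the constraint $E_{[a,c]}(t)\ge P_{[a,c]}(t)$. The transmission rate is $\mu_{[a,c]}(t)=\mu_{[a,c]}(P_{[a,c]}(t))\le\mu_{max}$, with a constant $\delta>0$ such that $\mu_{[a,c]}(P)\le\delta P$; it is split as $\mu_{[a,c]}(t)=\sum_b\mu^b_{[a,c]}(t)$ over data types (type-$b$ = destined to $b$). $Q_a^b(t)$ is the type-$b$ queue at $a$, $R_a^b(t)\in[0,R_{max}]$ the admitted new type-$b$ data at $a$, with $Q_a^b(t+1)=Q_a^b(t)+R_a^b(t)+\sum_{c\in\mathcal{N}_a^{in}}\mu^b_{[c,a]}(t)-\sum_{c\in\mathcal{N}_a^{out}}\mu^b_{[a,c]}(t)$.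 Utilities $U_a^b$ are concave nondecreasing; $\beta=\max_{a,b}(U_a^b)'(0)$. $V>0$ is a parameter; $\gamma=R_{max}+d_{max}\mu_{max}$; $\theta_{[a,c]}=\delta\beta V+P_{max}$. Weights: $W^b_{[a,c]}(t)=\max(Q_a^b(t)-Q_c^b(t)-\gamma,0)$, $W_{[a,c]}(t)=\max_bW^b_{[a,c]}(t)$. Algorithm, each slot $t$: (1) set $S_{[a,c]}(t)=1$ if $E_{[a,c]}(t)<\theta_{[a,c]}$, else $0$; (2) choose $R_a^b(t)\in[0,R_{max}]$ maximizing $VU_a^b(R)-Q_a^b(t)R$; (3) choose $\vec P(t)$ maximizing $\sum_{l_{[a,c]}\in\mathcal{L}}\{\mu_{[a,c]}(P_{[a,c]})W_{[a,c]}(t)+(E_{[a,c]}(t)-\theta_{[a,c]})P_{[a,c]}\}$ subject to $E_{[a,c]}(t)\ge P_{[a,c]}$; (4) pick $b^*\in\arg\max_bW^b_{[a,c]}(t)$ and, if $W^{b^*}_{[a,c]}(t)>0$, set $\mu^{b^*}_{[a,c]}(t)=\mu_{[a,c]}(t)$ (all other types get zero on that link); (5) update queues and key storage by the dynamics above. *)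

(* Defs.v *)
From mathcomp Require Import all_boot.
From Stdlib Require Import Reals.

Set Implicit Arguments.
Unset Strict Implicit.
Unset Printing Implicit Defensive.

Notation "\rsum_ ( i | P ) F" := (\big[Rplus/0%R]_(i | P) F)
  (at level 41, F at level 41, i at level 50).

(* d_max = max_a max(|N_a^in|, |N_a^out|), for the directed link relation L
   (L a c  <->  there is a link l_[a,c]). *)
Definition d_max (N : finType) (L : rel N) : nat :=
  \max_(a : N) maxn #|[pred c | L c a]| #|[pred c | L a c]|.

Open Scope R_scope.

Definition concave_nonneg (U : R -> R) : Prop :=
  forall x y l, 0 <= x -> 0 <= y -> 0 <= l <= 1 ->
    l * U x + (1 - l) * U y <= U (l * x + (1 - l) * y).

Definition nondecr_nonneg (U : R -> R) : Prop :=
  forall x y, 0 <= x -> x <= y -> U x <= U y.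

Definition deriv_at0 (U : R -> R) (d : R) : Prop :=
  forall eps, 0 < eps -> exists delta, 0 < delta /\
    forall h, 0 < h < delta -> Rabs ((U h - U 0) / h - d) < eps.

Definition gammaC (Rmax mumax : R) (dmax : nat) : R := Rmax + INR dmax * mumax.

Definition thetaC (delta beta V Pmax : R) : R := delta * beta * V + Pmax.

Definition Wb (N : finType) (gamma : R) (Q : N -> N -> R) (a c b : N) : R :=
  Rmax (Q a b - Q c b - gamma) 0.

(* W_[a,c](t) = max_b W^b_[a,c](t)  (all W^b >= 0, so 0 is a valid base). *)
Definition Wl (N : finType) (gamma : R) (Q : N -> N -> R) (a c : N) : R :=
  \big[Rmax/0]_(b : N) Wb gamma Q a c b.

Definition objP (N : finType) (L : rel N) (mu : N -> N -> R -> R)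
    (W E : N -> N -> R) (theta : R) (P : N -> N -> R) : R :=
  \rsum_(a | true) \rsum_(c | L a c)
     (mu a c (P a c) * W a c + (E a c - theta) * P a c).

(* Main.v *)
Require Import Defs.
From mathcomp Require Import all_boot.
From Stdlib Require Import Reals.
Open Scope R_scope.


From Stdlib Require Import Lra Classical.

Lemma sum_seq (T : Type) (s : seq T) (P : pred T) (f : T -> R) m :
  (forall i, P i -> 0 <= f i <= m) ->
  0 <= \big[Rplus/0]_(i <- s | P i) f i <= INR (count P s) * m.
Proof.
move=> H; elim: s => [|x s IH]; first by rewrite big_nil /=; lra.
rewrite big_cons.
have -> : count P (x :: s) = addn (nat_of_bool (P x)) (count P s) by [].
case Px: (P x).
- rewrite add1n S_INR; have := H x Px; lra.
- rewrite add0n; exact IH.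
Qed.

Lemma sum_seq0 (T : Type) (s : seq T) (P : pred T) (f : T -> R) :
  (forall i, P i -> f i = 0) -> \big[Rplus/0]_(i <- s | P i) f i = 0.
Proof.
move=> H; elim: s => [|x s IH]; first by rewrite big_nil.
rewrite big_cons; case Px: (P x); last exact IH.
rewrite IH H //; lra.
Qed.

Lemma cnt_in (N : finType) (L : rel N) a :
  leq (count (fun c => L c a) (index_enum N)) (d_max L).
Proof.
have := leq_bigmax (F := fun a => maxn #|[pred c | L c a]| #|[pred c | L a c]|) a.
rewrite /d_max; apply: leq_trans; rewrite cardE /enum_mem size_filter.
exact: leq_maxl.
Qed.

Lemma cnt_out (N : finType) (L : rel N) a :
  leq (count (fun c => L a c) (index_enum N)) (d_max L).
Proof.
have := leq_bigmax (F := fun a => maxn #|[pred c | L c a]| #|[pred c | L a c]|) a.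
rewrite /d_max; apply: leq_trans; rewrite cardE /enum_mem size_filter.
rewrite cardE /enum_mem size_filter; exact: leq_maxr.
Qed.

Lemma cnt_R n m (mx : R) : leq n m -> 0 <= mx -> INR n * mx <= INR m * mx.
Proof.
move=> /leP H Hm; apply: Rmult_le_compat_r => //; exact: le_INR.
Qed.

Lemma Rmax0_pos x : 0 < Rmax x 0 -> 0 < x.
Proof. unfold Rmax; destruct (Rle_dec x 0); lra. Qed.

Lemma deriv_nonneg U d : nondecr_nonneg U -> deriv_at0 U d -> 0 <= d.
Proof.
move=> Hm Hd; apply: Rnot_lt_le => Hlt.
have [de [Hde Hh]] := Hd (- d) ltac:(lra).
have Hh2 := Hh (de / 2) ltac:(lra).
have Hu := Hm 0 (de / 2) ltac:(lra) ltac:(lra).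
have Hq : 0 <= (U (de/2) - U 0) / (de / 2).
  apply: Rmult_le_pos; [lra | apply: Rlt_le; apply: Rinv_0_lt_compat; lra].
move: Hh2; rewrite Rabs_right; lra.
Qed.

Lemma conc_bound U d : concave_nonneg U -> deriv_at0 U d ->
  forall r, 0 <= r -> U r - U 0 <= d * r.
Proof.
move=> Hc Hd r Hr.
destruct (Req_dec r 0) as [->|Hr0]; first by rewrite Rmult_0_r; lra.
have Hrp : 0 < r by lra.
apply: Rnot_lt_le => Hlt.
set s := (U r - U 0) / r.
have Hs : d < s.
  unfold s; apply (Rmult_lt_reg_r r) => //.
  rewrite /Rdiv Rmult_assoc Rinv_l; lra.
have [de [Hde Hh]] := Hd (s - d) ltac:(lra).
set h := Rmin r de / 2.
have Hmin1 := Rmin_l r de. have Hmin2 := Rmin_r r de.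
have Hmin3 : 0 < Rmin r de by apply: Rmin_pos.
have Hh0 : 0 < h by unfold h; lra.
have Hhd : h < de by unfold h; lra.
have Hhr : h < r by unfold h; lra.
have Hcc := Hc r 0 (h / r) ltac:(lra) ltac:(lra).
have Hl : 0 <= h / r <= 1.
  split; first by apply: Rmult_le_pos; [lra | apply: Rlt_le; apply: Rinv_0_lt_compat].
  apply (Rmult_le_reg_r r) => //; rewrite /Rdiv Rmult_assoc Rinv_l; lra.
have := Hcc Hl.
have -> : h / r * r + (1 - h / r) * 0 = h by field; lra.
move=> Hconc.
have Hq : s <= (U h - U 0) / h.
  apply (Rmult_le_reg_r h) => //.
  rewrite /Rdiv Rmult_assoc Rinv_l; last lra.
  have Heq : h / r * U r + (1 - h / r) * U 0 = U 0 + h * s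
    by unfold s; field; lra.
  lra.
have := Hh h ltac:(lra).
rewrite Rabs_right; lra.
Qed.

Arguments deriv_nonneg {U d}.
Arguments conc_bound {U d}.
Arguments Rmax0_pos {x}.

Theorem lemma1
  (N : finType) (L : rel N)
  (* link parameters *)
  (K : N -> N -> R) (Kmax Pmax mumax Rmax delta V beta : R)
  (mu : N -> N -> R -> R)
  (* utilities and their derivatives at 0 *)
  (U : N -> N -> R -> R) (dU : N -> N -> R)
  (* a trajectory of the algorithm *)
  (Q : nat -> N -> N -> R) (E : nat -> N -> N -> R) (Son : nat -> N -> N -> bool)
  (P : nat -> N -> N -> R) (Rin : nat -> N -> N -> R)
  (mub : nat -> N -> N -> N -> R)
  (* standing assumptions *)
  (HK : forall a c, L a c -> 0 <= K a c <= Kmax)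
  (HPmax : 0 <= Pmax) (HRmax : 0 <= Rmax) (Hmumax : 0 <= mumax)
  (Hdelta : 0 < delta) (HV : 0 < V)
  (Hmu : forall a c p, L a c -> 0 <= p <= Pmax ->
           0 <= mu a c p <= mumax /\ mu a c p <= delta * p)
  (HUconc : forall a b, concave_nonneg (U a b))
  (HUmon : forall a b, nondecr_nonneg (U a b))
  (HdU : forall a b, deriv_at0 (U a b) (dU a b))
  (Hbeta : (forall a b, dU a b <= beta) /\ (exists a b, dU a b = beta))
  (* initial conditions *)
  (HQ0 : forall a b, Q 0%nat a b = 0)
  (HE0 : forall a c, L a c -> E 0%nat a c = 0)
  (* (1) QKD on/off decision *)
  (HS : forall t a c, L a c ->
          (Son t a c = true <-> E t a c < thetaC delta beta V Pmax))
  (* (2) admission control *)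
  (HR : forall t a b, 0 <= Rin t a b <= Rmax /\
          forall r, 0 <= r <= Rmax ->
            V * U a b r - Q t a b * r <= V * U a b (Rin t a b) - Q t a b * Rin t a b)
  (* (3) key consumption *)
  (HP : forall t,
          (forall a c, L a c -> 0 <= P t a c <= Pmax /\ P t a c <= E t a c) /\
          forall P' : N -> N -> R,
            (forall a c, L a c -> 0 <= P' a c <= Pmax /\ P' a c <= E t a c) ->
            objP L mu (Wl (gammaC Rmax mumax (d_max L)) (Q t)) (E t)
                 (thetaC delta beta V Pmax) P'
            <= objP L mu (Wl (gammaC Rmax mumax (d_max L)) (Q t)) (E t)
                 (thetaC delta beta V Pmax) (P t))
  (* (4) routing: all rate of the link to one type b* maximizing W^b *)
  (Hroute : forall t a c, L a c -> exists bs : N,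
          (forall b, Wb (gammaC Rmax mumax (d_max L)) (Q t) a c b
                     <= Wb (gammaC Rmax mumax (d_max L)) (Q t) a c bs) /\
          (forall b, mub t a c b =
             if b == bs then
               (if Rlt_dec 0 (Wb (gammaC Rmax mumax (d_max L)) (Q t) a c bs)
                then mu a c (P t a c) else 0)
             else 0))
  (* (5) dynamics *)
  (HQdyn : forall t a b,
          Q t.+1 a b = Q t a b + Rin t a b
                        + \rsum_(c | L c a) mub t c a b
                        - \rsum_(c | L a c) mub t a c b)
  (HEdyn : forall t a c, L a c ->
          E t.+1 a c = E t a c - P t a c + (if Son t a c then K a c else 0))
  : forall t : nat,
      (forall a b, 0 <= Q t a b <= beta * V + Rmax) /\
      (forall a c, L a c -> 0 <= E t a c <= thetaC delta beta V Pmax + Kmax).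
Proof.
set g := gammaC Rmax mumax (d_max L).
set th := thetaC delta beta V Pmax.
have [Hbl [a0 [b0 Hab0]]] := Hbeta.
have Hb0 : 0 <= beta by rewrite -Hab0; apply: (deriv_nonneg (HUmon a0 b0) (HdU a0 b0)).
have Hdm : 0 <= INR (d_max L) := pos_INR _.
have Hdmm : 0 <= INR (d_max L) * mumax by apply: Rmult_le_pos.
have Hg : g = Rmax + INR (d_max L) * mumax by [].
have Hth : 0 <= th.
  unfold th, thetaC; have := Rmult_le_pos _ _ (Rlt_le _ _ Hdelta) Hb0.
  move=> H1; have := Rmult_le_pos _ _ H1 (Rlt_le _ _ HV); lra.
have Hlink : forall t a c b, L a c ->
   (forall a' c', L a' c' -> 0 <= P t a' c' <= Pmax) ->
   0 <= mub t a c b <= mumax /\ (mub t a c b <> 0 -> 0 < Q t a b - Q t c b - g).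
  move=> t a c b Hac HPt.
  have [bs [_ Hm]] := Hroute t a c Hac.
  rewrite Hm; case: eqP => [->|_]; last by split; [lra | done].
  destruct Rlt_dec as [Hw|Hw] => /=; last by split; [lra | done].
  have := Hmu a c (P t a c) Hac (HPt a c Hac).
  move=> [[H1 H2] _]; split; first by lra.
  move=> _; exact: (Rmax0_pos Hw).
elim=> [|t [IHQ IHE]].
  split; first by move=> a b; rewrite HQ0; split; [lra|]; have := Rmult_le_pos _ _ Hb0 (Rlt_le _ _ HV); lra.
  move=> a c Hac; rewrite HE0 //; have := HK a c Hac; lra.
have [HPt _] := HP t.
have HPt' : forall a' c', L a' c' -> 0 <= P t a' c' <= Pmax by move=> a' c' H; case: (HPt a' c' H).
split.
- move=> a b.
  have [[HR0 HR1] HRopt] := HR t a b.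
  have Hin : 0 <= \rsum_(c | L c a) mub t c a b <= INR (d_max L) * mumax.
    have := @sum_seq N (index_enum N) (fun c => L c a) (fun c => mub t c a b) mumax.
    move=> H; have [H1 H2] := H (fun c Hc => proj1 (Hlink t c a b Hc HPt')).
    split => //; apply: Rle_trans H2 _; apply: cnt_R => //; exact: cnt_in.
  have Hout : 0 <= \rsum_(c | L a c) mub t a c b <= INR (d_max L) * mumax.
    have := @sum_seq N (index_enum N) (fun c => L a c) (fun c => mub t a c b) mumax.
    move=> H; have [H1 H2] := H (fun c Hc => proj1 (Hlink t a c b Hc HPt')).
    split => //; apply: Rle_trans H2 _; apply: cnt_R => //; exact: cnt_out.
  have Hin2 : (exists c, L c a /\ 0 < Q t c b - Q t a b - g) \/
              \rsum_(c | L c a) mub t c a b = 0.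
    destruct (classic (exists c, L c a /\ 0 < Q t c b - Q t a b - g)) as [H|H]; first by left.
    right; apply: sum_seq0 => c Hc.
    destruct (Req_dec (mub t c a b) 0) as [E0|E0] => //.
    exfalso; apply: H; exists c; split => //; exact: (proj2 (Hlink t c a b Hc HPt') E0).
  have Hout2 : (exists c, L a c /\ 0 < Q t a b - Q t c b - g) \/
              \rsum_(c | L a c) mub t a c b = 0.
    destruct (classic (exists c, L a c /\ 0 < Q t a b - Q t c b - g)) as [H|H]; first by left.
    right; apply: sum_seq0 => c Hc.
    destruct (Req_dec (mub t a c b) 0) as [E0|E0] => //.
    exfalso; apply: H; exists c; split => //; exact: (proj2 (Hlink t a c b Hc HPt') E0).
  have HQa := IHQ a b.
  rewrite HQdyn; split.
  + case: Hout2 => [[c [_ Hc]]|->]; last by lra.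
    have := IHQ c b; lra.
  + case: Hin2 => [[c [_ Hc]]|->]; first by have := IHQ c b; lra.
    destruct (Rle_dec (Q t a b) (beta * V)) as [Hle|Hgt]; first by lra.
    have HRin : Rin t a b <= 0.
      have Hopt := HRopt 0 ltac:(lra).
      have Hcb := conc_bound (HUconc a b) (HdU a b) _ HR0.
      have Hd := Hbl a b.
      have HVc : V * (U a b (Rin t a b) - U a b 0) <= V * (dU a b * Rin t a b)
        by apply: Rmult_le_compat_l; lra.
      have HQV : V * dU a b <= V * beta by apply: Rmult_le_compat_l; lra.
      nra.
    lra.
- move=> a c Hac.
  have [[HP0 HP1] HP2] := HPt a c Hac.
  have [HK0 HK1] := HK a c Hac.
  have HEa := IHE a c Hac.
  have HSa := HS t a c Hac.
  rewrite HEdyn //; case HSon: (Son t a c).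
  + have := proj1 HSa HSon; fold th; lra.
  + have : ~ E t a c < th by move=> H; have := proj2 HSa H; rewrite HSon.
    fold th in HEa |- *; lra.
Qed.
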